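(* Fix a time $t \ge 0$ and an evaluation policy $\pi_e$. Assume (common support) that for all $x \in \mathcal{X}$ and $a \in \mathcal{A}$, $\pi_e(a\mid x)>0$ implies $\pi_0(a\mid x)>0$; assume (conditional independent censoring) that $L$ and $C$ are conditionally independent given $(x,a)$; and assume censoring is present, i.e. $P(L>C)>0$. Let $\hat S(x,a,t)$ be any fixed (non-random, not depending on $\mathcal{D}$) outcome model. Then the naive IPS estimator $$\hat V_{\mathrm{IPS}}(\pi_e,t;\mathcal{D}) = \frac1n\sum_{i=1}^n w(x_i,a_i)\,\mathbb{I}\{T_i>t\}$$ and the naive DR estimator $$\hat V_{\mathrm{DR}}(\pi_e,t;\mathcal{D}) = \frac1n\sum_{i=1}^n\Big\{ w(x_i,a_i)\big(\mathbb{I}\{T_i>t\}-\hat S(x_i,a_i,t)\big)+\sum_{a\in\mathcal{A}}\pi_e(a\mid x_i)\hat S(x_i,a,t)\Big\},$$ where $w(x,a)=\pi_e(a\mid x)/\pi_0(a\mid x)$, have the same bias $$\mathrm{Bias}[\hat V_{\mathrm{IPS}}]=\mathrm{Bias}[\hat V_{\mathrm{DR}}]=\mathbb{E}_{p(x)\pi_e(a\mid x)}\big[S(x,a,t)\,(G(t\mid x,a)-1)\big],$$ where $\mathrm{Bias}[\hat V]=\mathbb{E}_{\mathcal{D}}[\hat V]-V(\pi_e,t)$.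
   Context: Let $\mathcal{X}$ be a context space and $\mathcal{A}$ a finite action set. A policy $\pi(a\mid x)$ is a conditional distribution over $\mathcal{A}$ given $x$. The logged data $\mathcal{D}=\{(x_i,a_i,T_i,r_i)\}_{i=1}^n$ consists of $n$ i.i.d. draws generated by $(x,a,L,C)\sim p(x)\pi_0(a\mid x)p(L,C\mid x,a)$ for a logging policy $\pi_0$, where $L\ge 0$ is the latent survival time, $C\ge 0$ the censoring time, and only $T=\min\{L,C\}$ and $r=\mathbb{I}\{L\le C\}$ are observed. Define the survival function $S(x,a,t)=P(L>t\mid x,a)$, the censoring survival function $G(t\mid x,a)=P(C>t\mid x,a)$, and the policy value $V(\pi_e,t)=\mathbb{E}_{p(x)\pi_e(a\mid x)}[S(x,a,t)]$. *)

(* Defs.v *)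
From HB Require Import structures.
From mathcomp Require Import all_boot all_order all_algebra.
From mathcomp Require Import all_classical all_reals all_analysis.
From mathcomp Require Import measurable_realfun.
Set Implicit Arguments. Unset Strict Implicit. Unset Printing Implicit Defensive.
Import Order.TTheory GRing.Theory Num.Theory.
Import numFieldNormedType.Exports.
Local Open Scope classical_set_scope.
Local Open Scope ring_scope.

Section Defs.
Context {R : realType} {dX : measure_display} {X : measurableType dX}
  {A : finType}.

(* A policy pi : X -> A -> R, pi x a = pi(a | x). *)
Definition is_policy (pi : X -> A -> R) : Prop :=
  (forall x a, 0 <= pi x a) /\ (forall x, \sum_(a : A) pi x a = 1) /\
  (forall a, measurable_fun setT (fun x => pi x a)).

(* Conditional law of (L, C) given (x, a): K x a is a probability on R * R,
   first component = latent survival time L, second = censoring time C. *)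
Definition is_outcome_kernel (K : X -> A -> probability (R * R)%type R) : Prop :=
  (forall a E, measurable E -> measurable_fun [set: X] (fun x => K x a E)) /\
  (forall x a, K x a [set y | 0 <= y.1 /\ 0 <= y.2] = 1%E).

Definition surv (K : X -> A -> probability (R * R)%type R) x a (t : R) : R :=
  fine (K x a [set y | t < y.1]).

Definition csurv (K : X -> A -> probability (R * R)%type R) (t : R) x a : R :=
  fine (K x a [set y | t < y.2]).

Definition cond_indep_censoring (K : X -> A -> probability (R * R)%type R) : Prop :=
  forall x a (E1 E2 : set R), measurable E1 -> measurable E2 ->
    K x a (E1 `*` E2) = (K x a (E1 `*` setT) * K x a (setT `*` E2))%E.

Definition model_prob (px : probability X R) (pi0 : X -> A -> R)
    (K : X -> A -> probability (R * R)%type R)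
    (S : {set A}) (B : set X) (E : set (R * R)) : \bar R :=
  (\sum_(a in S) \int[px]_(x in B) ((pi0 x a)%:E * K x a E))%E.

Definition censoring_present px pi0 K : Prop :=
  (0 < model_prob px pi0 K [set: A]%SET setT [set y | (y.2 < y.1)%R])%E.

Definition policy_value (px : probability X R) (pie : X -> A -> R) K (t : R)
  : \bar R := (\int[px]_x (\sum_(a : A) pie x a * surv K x a t)%:E)%E.

Definition iw (pie pi0 : X -> A -> R) x a : R := pie x a / pi0 x a.

Section Data.
Context {dO : measure_display} {Omega : measurableType dO} {n : nat}.
Variables (Xs : 'I_n -> Omega -> X) (As : 'I_n -> Omega -> A)
  (Ls Cs : 'I_n -> Omega -> R).

Definition data_event (i : 'I_n) (S : {set A}) (B : set X) (E : set (R * R))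
  : set Omega := [set w | As i w \in S /\ B (Xs i w) /\ E (Ls i w, Cs i w)].

Definition data_measurable : Prop :=
  forall i, measurable_fun setT (Xs i) /\ measurable_fun setT (Ls i) /\
    measurable_fun setT (Cs i) /\ (forall a, measurable [set w | As i w = a]).

Definition data_law (P : probability Omega R) px pi0 K : Prop :=
  forall i S B E, measurable B -> measurable E ->
    P (data_event i S B E) = model_prob px pi0 K S B E.

Definition data_indep (P : probability Omega R) : Prop :=
  forall (S : 'I_n -> {set A}) (B : 'I_n -> set X) (E : 'I_n -> set (R * R))
    (J : {set 'I_n}),
    (forall i, measurable (B i)) -> (forall i, measurable (E i)) ->
    P (\bigcap_(i in [set j | j \in J]) data_event i (S i) (B i) (E i))
    = (\prod_(i in J) fine (P (data_event i (S i) (B i) (E i))))%:E.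

Definition obs_time (i : 'I_n) (w : Omega) : R := Num.min (Ls i w) (Cs i w).

Definition indic (b : bool) : R := if b then 1 else 0.

Definition V_IPS (pie pi0 : X -> A -> R) (t : R) (w : Omega) : R :=
  n%:R^-1 * \sum_(i < n)
    iw pie pi0 (Xs i w) (As i w) * indic (t < obs_time i w).

Definition V_DR (pie pi0 : X -> A -> R) (Shat : X -> A -> R -> R) (t : R)
  (w : Omega) : R :=
  n%:R^-1 * \sum_(i < n)
    (iw pie pi0 (Xs i w) (As i w) *
       (indic (t < obs_time i w) - Shat (Xs i w) (As i w) t)
     + \sum_(a : A) pie (Xs i w) a * Shat (Xs i w) a t).

End Data.
End Defs.

(* Main.v *)
Require Import Defs.
From HB Require Import structures.
From mathcomp Require Import all_boot all_order all_algebra.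
From mathcomp Require Import all_classical all_reals all_analysis.
From mathcomp Require Import measurable_realfun.
Import Order.TTheory GRing.Theory Num.Theory.
Import numFieldNormedType.Exports.
Local Open Scope classical_set_scope.
Local Open Scope ring_scope.
Local Open Scope ereal_scope.
Import HBNNSimple.

Lemma density_integral d (T : measurableType d) (R : realType)
  (nu mu : {measure set T -> \bar R}) (g : T -> \bar R) :
  (forall x, 0 <= g x) -> (forall x, g x \is a fin_num) -> measurable_fun setT g ->
  (forall A, measurable A -> nu A = \int[mu]_(x in A) g x) ->
  forall f, (forall x, 0 <= f x) -> measurable_fun setT f ->
  \int[mu]_x (f x * g x) = \int[nu]_x f x.
Proof.
move=> g0 gfin mg nuA f f0 mf.
have mE : measurable (@setT T) by [].
pose h := nnsfun_approx mE mf.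
have -> : \int[nu]_x f x =
    lim (\int[nu]_x (EFin \o h n) x @[n --> \oo]).
  have fE x : [set: T] x -> f x = lim ((EFin \o h n) x @[n --> \oo]).
    by move=> Ex; apply/esym/cvg_lim => //; exact: cvg_nnsfun_approx.
  under eq_integral => x /[!inE] /fE -> //.
  apply: monotone_convergence => //.
  - move=> n; apply/measurable_EFinP.
    by apply: (measurable_funS measurableT) => //; exact/measurable_funP.
  - by move=> n x Ex //=; rewrite lee_fin.
  - by move=> x Ex a b ab; rewrite lee_fin; exact/lefP/nd_nnsfun_approx.
have -> : \int[mu]_x (f \* g) x =
    lim (\int[mu]_x ((EFin \o h n) \* g) x @[n --> \oo]).
  have fg x : [set: T] x -> f x * g x = lim (((EFin \o h n) \* g) x @[n --> \oo]).
    by move=> Ex; apply/esym/cvg_lim => //; apply: cvgeZr;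
      [exact: gfin|exact: cvg_nnsfun_approx].
  under eq_integral => x /[!inE] /fg -> //.
  apply: monotone_convergence => [//| | |].
  - move=> n; apply/emeasurable_funM; apply/measurable_funTS.
      exact/measurable_EFinP.
    exact: mg.
  - by move=> n x Ex /=; rewrite mule_ge0 ?lee_fin ?g0.
  - by move=> x Ex a b ab/=; rewrite lee_wpmul2r ?lee_fin ?g0//; exact/lefP/nd_nnsfun_approx.
suff suf n : \int[mu]_x ((EFin \o h n) x * g x) =
    \int[nu]_x (EFin \o h n) x.
  by under eq_fun do rewrite suf.
transitivity (\int[nu]_x
   (\sum_(y \in range (h n)) (y * \1_(h n @^-1` [set y]) x)%:E)); last first.
  by apply: eq_integral => t tE; rewrite /= fimfunE -fsumEFin.
have indich m r : measurable_fun setT (fun x => (r * \1_(h m @^-1` [set r]) x)%:E).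
  by apply: (measurable_comp measurableT) => //; exact: measurable_funM.
rewrite ge0_integral_fsum//; last by move=> m y Ey; exact: nnfun_muleindic_ge0.
transitivity (\int[mu]_x (\sum_(y \in range (h n))
    (y * \1_(h n @^-1` [set y]) x)%:E * g x)).
  under [RHS]eq_integral => x xE.
    rewrite -ge0_mule_fsuml => [|y]; last exact: nnfun_muleindic_ge0.
    rewrite fsumEFin // -(fimfunE _ x); over.
  by [].
rewrite ge0_integral_fsum//; last 2 first.
  - move=> y; apply: emeasurable_funM => //.
  - by move=> m y Ey; rewrite mule_ge0 ?g0// nnfun_muleindic_ge0.
apply: eq_fsbigr => r rhn.
under [RHS]eq_integral do rewrite EFinM.
rewrite integralZl_indic_nnsfun => //.
under eq_integral do rewrite EFinM -muleA.
rewrite ge0_integralZl//.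
- under eq_integral do rewrite muleC.
  rewrite (eq_integral (g \_ (h n @^-1` [set r]))); last first.
    by move=> x xE; rewrite epatch_indic.
  rewrite -integral_mkcondr setTI -nuA//.
  by rewrite integral_indic// setIT.
- apply: emeasurable_funM; first exact/measurable_EFinP.
  exact: mg.
- by move=> t Et; rewrite mule_ge0 ?lee_fin ?g0.
- by move: rhn; rewrite inE => -[t _ <-]; rewrite lee_fin.
Qed.

Section core.
Context (R : realType) (dX : measure_display) (X : measurableType dX)
  (A : finType) (px : probability X R) (pi0 : X -> A -> R)
  (K : X -> A -> probability (R * R)%type R)
  (dO : measure_display) (Omega : measurableType dO) (P : probability Omega R)
  (n : nat) (Xs : 'I_n -> Omega -> X) (As : 'I_n -> Omega -> A)
  (Ls Cs : 'I_n -> Omega -> R).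
Hypothesis hpi0 : is_policy pi0.
Hypothesis hK : is_outcome_kernel K.
Hypothesis hmeas : data_measurable Xs As Ls Cs.
Hypothesis hlaw : data_law Xs As Ls Cs P px pi0 K.

Lemma core1 (i : 'I_n) (a : A) (E : set (R * R)) (mE : measurable E)
  (h : X -> R) (mh : measurable_fun setT h) (h0 : forall x, (0 <= h x)%R) :
  \int[P]_w ((\1_[set w | As i w = a /\ E (Ls i w, Cs i w)] w) * h (Xs i w))%:E
  = \int[px]_x (h x * (pi0 x a * fine (K x a E)))%:E.
Proof.
have [mX [mL [mC mA]]] := hmeas i.
set D := [set w | _ /\ _].
have mLC : measurable_fun setT (fun w => (Ls i w, Cs i w)).
  exact: measurable_fun_pair.
have mD : measurable D.
  have -> : D = [set w | As i w = a] `&` ((fun w => (Ls i w, Cs i w)) @^-1` E).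
    by apply/seteqP; split => w /=.
  apply: measurableI; first exact: mA.
  by rewrite -[X in measurable X]setTI; exact: mLC.
pose Q := mrestr P mD.
pose nu := measure_function_pushforward__canonical__measure_function_Measure Q mX.
have g0 : forall x, 0 <= ((pi0 x a)%:E * K x a E).
  move=> x; rewrite mule_ge0 //; first by rewrite lee_fin; case: hpi0.
have gfin : forall x, ((pi0 x a)%:E * K x a E) \is a fin_num.
  move=> x; rewrite fin_numM //; exact: fin_num_measure.
have mg : measurable_fun setT (fun x => ((pi0 x a)%:E * K x a E)).
  apply: emeasurable_funM; last by case: hK => + _; apply.
  apply/measurable_EFinP; case: hpi0 => _ [_]; apply.
transitivity (\int[P]_w ((h (Xs i w))%:E * (\1_D w)%:E)).
  by apply: eq_integral => w _; rewrite -EFinM mulrC.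
rewrite (@density_integral _ _ _ Q P); last 6 first.
- by move=> w; apply: lee_tofin.
- by [].
- by apply/measurable_EFinP; exact: measurable_indic.
- by move=> B mB; rewrite integral_indic // /Q /mrestr setIC.
- by move=> w; apply: lee_tofin.
- by apply/measurable_EFinP; exact: measurableT_comp.
have := @ge0_integral_pushforward _ _ _ _ _ _ mX Q setT (fun x => (h x)%:E) measurableT.
rewrite preimage_setT => <-; last 2 first.
- by apply/measurable_EFinP.
- by move=> x _; rewrite lee_fin.
rewrite -(@density_integral _ _ _ nu px (fun x => ((pi0 x a)%:E * K x a E))); last 6 first.
- exact: g0.
- exact: gfin.
- exact: mg.
- move=> B mB.
  rewrite /nu /= /pushforward /Q /mrestr.
  have -> : Xs i @^-1` B `&` D = data_event Xs As Ls Cs i [set a]%SET B E.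
    apply/seteqP; split => w /=; rewrite /data_event /D /= inE.
      by move=> [? [-> ?]]; rewrite eqxx.
    by move=> [/eqP -> [? ?]].
  by rewrite hlaw // /model_prob big_set1.
- by move=> x; rewrite lee_fin.
- by apply/measurable_EFinP.
apply: eq_integral => x _.
by rewrite -[K x a E]fineK ?fin_num_measure // -!EFinM.
Qed.

Lemma mLC (i : 'I_n) : measurable_fun setT (fun w => (Ls i w, Cs i w)).
Proof. have [_ [mL [mC _]]] := hmeas i; exact: measurable_fun_pair. Qed.

Lemma mEE (i : 'I_n) (E : set (R * R)) : measurable E ->
  measurable [set w | E (Ls i w, Cs i w)].
Proof.
move=> mE; rewrite -[X in measurable X]setTI; exact: (mLC i).
Qed.

Lemma mDa (i : 'I_n) (a : A) (E : set (R * R)) : measurable E ->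
  measurable [set w | As i w = a /\ E (Ls i w, Cs i w)].
Proof.
move=> mE; have [_ [_ [_ mA]]] := hmeas i.
have -> : [set w | As i w = a /\ E (Ls i w, Cs i w)] =
  [set w | As i w = a] `&` [set w | E (Ls i w, Cs i w)].
  by apply/seteqP; split => w /=.
apply: measurableI; first exact: mA.
exact: mEE.
Qed.

Lemma coreA (i : 'I_n) (E : set (R * R)) (mE : measurable E)
  (h : X -> A -> R) (mh : forall a, measurable_fun setT (h^~ a))
  (h0 : forall x a, (0 <= h x a)%R) :
  \int[P]_w ((\1_[set w | E (Ls i w, Cs i w)] w) * h (Xs i w) (As i w))%:E
  = \sum_(a : A) \int[px]_x (h x a * (pi0 x a * fine (K x a E)))%:E.
Proof.
have [mX _] := hmeas i.
transitivity (\int[P]_w (\sum_(a : A)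
   ((\1_[set w | As i w = a /\ E (Ls i w, Cs i w)] w) * h (Xs i w) a)%:E)).
  apply: eq_integral => w _; rewrite sumEFin; congr (_%:E).
  rewrite (bigD1 (As i w)) //= big1 ?addr0.
    case: (pselect (E (Ls i w, Cs i w))) => HE.
      by rewrite !indicE !mem_set.
    by rewrite !indicE !memNset //= => -[].
  move=> b hb; rewrite indicE memNset ?mul0r //.
  by move=> /= [hb' _]; rewrite hb' eqxx in hb.
rewrite ge0_integral_sum //.
- by apply: eq_bigr => a _; apply: core1.
- move=> a; apply/measurable_EFinP; apply: measurable_funM.
    by apply: measurable_indic; exact: mDa.
  exact: (measurableT_comp (mh a) mX).
- by move=> a w _; apply: lee_tofin; apply: mulr_ge0.
Qed.
End core.

Lemma measurable_inv (R : realType) : measurable_fun [set: R] (fun x : R => x^-1)%R.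
Proof.
have -> : [set: R] = ~` [set 0%R] `|` [set 0%R] by rewrite setUC setUv.
apply/measurable_funU => //; last first.
  split; last exact: measurable_fun_set1.
  apply: subspace_continuous_measurable_fun.
  - by apply: measurableC.
  - apply: continuous_in_subspaceT => x /set_mem /= x0.
    by apply: inv_continuous; apply/eqP.
exact: measurableC.
Qed.

Lemma prob_fine01 d (T : measurableType d) (R : realType) (mu : probability T R)
  (E : set T) : measurable E -> (0 <= fine (mu E) <= 1)%R.
Proof.
move=> mE; apply/andP; split; first exact/fine_ge0/measure_ge0.
rewrite -[1%R]/(fine 1%E); apply: fine_le => //; first exact: fin_num_measure.
exact: probability_le1.
Qed.

Lemma int01 d (T : measurableType d) (R : realType) (mu : probability T R)
  (f : T -> R) : measurable_fun setT f -> (forall x, 0 <= f x <= 1)%R ->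
  mu.-integrable setT (EFin \o f).
Proof.
move=> mf f01; apply/integrableP; split; first exact/measurable_EFinP.
apply: (@le_lt_trans _ _ (\int[mu]_x (cst 1%E) x)).
  apply: ge0_le_integral => //.
  - by apply/measurable_EFinP; apply: measurableT_comp.
  - move=> x _ /=; have /andP[h0 h1] := f01 x; by rewrite lee_fin ger0_norm.
rewrite integral_cst // mul1e ltey_eq fin_num_measure //.
Qed.

Lemma int_of_fin d (T : measurableType d) (R : realType) (mu : probability T R)
  (f : T -> R) : measurable_fun setT f -> (forall x, 0 <= f x)%R ->
  \int[mu]_x (f x)%:E \is a fin_num ->
  mu.-integrable setT (EFin \o f).
Proof.
move=> mf f0 fin; apply/integrableP; split; first exact/measurable_EFinP.
under eq_integral => x _ do rewrite /= ger0_norm //.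
by rewrite ltey_eq fin.
Qed.

Section main.
Context (R : realType) (dX : measure_display) (X : measurableType dX)
  (A : finType) (px : probability X R) (pi0 pie : X -> A -> R)
  (K : X -> A -> probability (R * R)%type R) (t : R)
  (Shat : X -> A -> R -> R)
  (dO : measure_display) (Omega : measurableType dO) (P : probability Omega R)
  (n : nat) (Xs : 'I_n -> Omega -> X) (As : 'I_n -> Omega -> A)
  (Ls Cs : 'I_n -> Omega -> R).
Hypothesis n0 : (0 < n)%N.
Hypothesis hpi0 : is_policy pi0.
Hypothesis hpie : is_policy pie.
Hypothesis hK : is_outcome_kernel K.
Hypothesis hsupp : forall x a, (0 < pie x a)%R -> (0 < pi0 x a)%R.
Hypothesis hind : cond_indep_censoring K.
Hypothesis hShm : forall a, measurable_fun setT (fun x => Shat x a t).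
Hypothesis hShb : forall x a s, (0 <= Shat x a s <= 1)%R.
Hypothesis hmeas : data_measurable Xs As Ls Cs.
Hypothesis hlaw : data_law Xs As Ls Cs P px pi0 K.

Let iwm a : measurable_fun setT (fun x => iw pie pi0 x a).
Proof.
apply: measurable_funM; first by case: hpie => _ [_]; apply.
apply: measurableT_comp; first exact: measurable_inv.
by case: hpi0 => _ [_]; apply.
Qed.

Let iw0 x a : (0 <= iw pie pi0 x a)%R.
Proof.
by rewrite /iw; apply: divr_ge0; [case: hpie => + _; apply | case: hpi0 => + _; apply].
Qed.

Let iwpi0 x a : (iw pie pi0 x a * pi0 x a = pie x a)%R.
Proof.
rewrite /iw; have [e|nz] := eqVneq (pi0 x a) 0%R.
  rewrite e mulr0; apply/esym/eqP; rewrite eq_le.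
  have -> : (0 <= pie x a)%R by case: hpie => + _; apply.
  rewrite andbT leNgt; apply/negP => /hsupp; by rewrite e ltxx.
by rewrite divfK.
Qed.

Let Et := [set y : R * R | (t < y.1)%R /\ (t < y.2)%R].

Let m1 : measurable [set x : R | (t < x)%R].
Proof. by rewrite -set_itvoy; exact: measurable_itv. Qed.

Let mS1 : measurable [set y : R * R | (t < y.1)%R].
Proof.
have -> : [set y : R * R | (t < y.1)%R] = [set x : R | (t < x)%R] `*` [set: R].
  by apply/seteqP; split => y /=; [move=> h; split | case].
exact: measurableX.
Qed.

Let mS2 : measurable [set y : R * R | (t < y.2)%R].
Proof.
have -> : [set y : R * R | (t < y.2)%R] = [set: R] `*` [set x : R | (t < x)%R].
  by apply/seteqP; split => y /=; [move=> h; split | case].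
exact: measurableX.
Qed.

Let mEt : measurable Et.
Proof.
have -> : Et = [set x : R | (t < x)%R] `*` [set x : R | (t < x)%R] by [].
exact: measurableX.
Qed.

Let KEt x a : fine (K x a Et) = (surv K x a t * csurv K t x a)%R.
Proof.
have -> : Et = [set x : R | (t < x)%R] `*` [set x : R | (t < x)%R] by [].
rewrite hind // /surv /csurv.
have -> : [set x : R | (t < x)%R] `*` [set: R] = [set y : R * R | (t < y.1)%R].
  by apply/seteqP; split => y /=; [case | split].
have -> : [set: R] `*` [set x : R | (t < x)%R] = [set y : R * R | (t < y.2)%R].
  by apply/seteqP; split => y /=; [case | split].
by rewrite fineM //; apply: fin_num_measure.
Qed.

Let survm a : measurable_fun setT (fun x => surv K x a t).
Proof.
apply: measurableT_comp; first exact: fine_measurable.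
by case: hK => + _; apply.
Qed.

Let csurvm a : measurable_fun setT (fun x => csurv K t x a).
Proof.
apply: measurableT_comp; first exact: fine_measurable.
by case: hK => + _; apply.
Qed.

Let surv01 x a : (0 <= surv K x a t <= 1)%R.
Proof. exact: prob_fine01. Qed.

Let csurv01 x a : (0 <= csurv K t x a <= 1)%R.
Proof. exact: prob_fine01. Qed.

Let swap (f : A -> X -> R) : (forall a, measurable_fun setT (f a)) ->
  (forall a x, (0 <= f a x)%R) ->
  \sum_(a : A) \int[px]_x (f a x)%:E = \int[px]_x (\sum_(a : A) f a x)%:E.
Proof.
move=> mf f0; under [RHS]eq_integral do rewrite -sumEFin.
rewrite ge0_integral_sum //.
- by move=> a; apply/measurable_EFinP.
- by move=> a x _; rewrite lee_fin.
Qed.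

Let measXA (i : 'I_n) (h : X -> A -> R) :
  (forall a, measurable_fun setT (h^~ a)) ->
  measurable_fun setT (fun w => h (Xs i w) (As i w)).
Proof.
move=> mh; have [mX [_ [_ mA]]] := hmeas i.
have -> : (fun w => h (Xs i w) (As i w)) =
   (fun w => \sum_(a : A) (\1_[set w | As i w = a] w * h (Xs i w) a))%R.
  apply/funext => w; rewrite (bigD1 (As i w)) //= big1 ?addr0.
    by rewrite indicE mem_set // mul1r.
  move=> b hb; rewrite indicE memNset ?mul0r //.
  by move=> /= hb'; rewrite hb' eqxx in hb.
apply: measurable_sum => a; apply: measurable_funM.
  by apply: measurable_indic; exact: mA.
exact: (measurableT_comp (mh a) mX).
Qed.

Let J := \int[px]_x (\sum_(a : A) pie x a * (surv K x a t * csurv K t x a))%:E.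
Let Q := \int[px]_x (\sum_(a : A) pie x a * Shat x a t)%:E.

Let pie0 x a : (0 <= pie x a)%R. Proof. by case: hpie => + _; apply. Qed.
Let pi00 x a : (0 <= pi0 x a)%R. Proof. by case: hpi0 => + _; apply. Qed.
Let piem a : measurable_fun setT (pie^~ a). Proof. by case: hpie => _ [_]; apply. Qed.

Let Jfin : J \is a fin_num.
Proof.
apply: integrable_fin_num => //; apply: int01.
  by apply: measurable_sum => a; apply: measurable_funM => //; apply: measurable_funM.
move=> x; apply/andP; split.
  by apply: sumr_ge0 => a _; apply: mulr_ge0 => //; apply: mulr_ge0;
    [have /andP[] := surv01 x a | have /andP[] := csurv01 x a].
case: hpie => _ [+ _] => /(_ x) <-; apply: ler_sum => a _.
rewrite ler_piMr //; have /andP[s0 s1] := surv01 x a; have /andP[c0 c1] := csurv01 x a.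
by rewrite mulr_ile1.
Qed.

Let Qfin : Q \is a fin_num.
Proof.
apply: integrable_fin_num => //; apply: int01.
  by apply: measurable_sum => a; apply: measurable_funM.
move=> x; apply/andP; split.
  by apply: sumr_ge0 => a _; apply: mulr_ge0 => //; have /andP[] := hShb x a t.
case: hpie => _ [+ _] => /(_ x) <-; apply: ler_sum => a _.
by rewrite ler_piMr //; have /andP[] := hShb x a t.
Qed.

Let gI (i : 'I_n) w := (iw pie pi0 (Xs i w) (As i w) * Defs.indic (t < obs_time Ls Cs i w))%R.

Let gIE i w : gI i w = (\1_[set w | Et (Ls i w, Cs i w)] w * iw pie pi0 (Xs i w) (As i w))%R.
Proof.
rewrite /gI mulrC /Defs.indic /obs_time lt_min indicE.
case: (boolP (t < Ls i w)%R) => h1; case: (boolP (t < Cs i w)%R) => h2 /=.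
- by rewrite mem_set.
- by rewrite memNset // => -[_ h']; rewrite h' in h2.
- by rewrite memNset // => -[h' _]; rewrite h' in h1.
- by rewrite memNset // => -[h' _]; rewrite h' in h1.
Qed.

Let gIm i : measurable_fun setT (gI i).
Proof.
have -> : gI i = (fun w => \1_[set w | Et (Ls i w, Cs i w)] w * iw pie pi0 (Xs i w) (As i w))%R.
  by apply/funext => w; rewrite gIE.
apply: measurable_funM; last exact: measXA.
apply: measurable_indic; exact: (mEE _ _ _ _ _ _ _ _ _ _ _ hmeas i Et mEt).
Qed.

Let gI0 i w : (0 <= gI i w)%R.
Proof. by rewrite gIE; apply: mulr_ge0. Qed.

Let termI i : \int[P]_w (gI i w)%:E = J.
Proof.
under eq_integral do rewrite gIE.
rewrite (coreA _ _ _ _ _ _ _ _ _ _ _ _ _ _ _ hpi0 hK hmeas hlaw i Et mEt) //.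
rewrite swap.
- apply: eq_integral => x _; congr (_%:E); apply: eq_bigr => a _.
  by rewrite mulrA iwpi0 KEt.
- move=> a; apply: measurable_funM => //; apply: measurable_funM.
    by case: hpi0 => _ [_]; apply.
  apply: measurableT_comp; first exact: fine_measurable.
  by case: hK => + _; apply.
- move=> a x; apply: mulr_ge0 => //; apply: mulr_ge0 => //.
  by have /andP[] := prob_fine01 _ _ _ (K x a) _ mEt.
Qed.

Let Shm a : measurable_fun setT (fun x => pie x a * Shat x a t)%R.
Proof. exact: measurable_funM. Qed.

Let Kfm a E : measurable E -> measurable_fun setT (fun x => fine (K x a E)).
Proof.
move=> mE; apply: measurableT_comp; first exact: fine_measurable.
by case: hK => + _; apply.
Qed.

Let pi0m a : measurable_fun setT (pi0^~ a). Proof. by case: hpi0 => _ [_]; apply. Qed.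

Let gU (i : 'I_n) w := (iw pie pi0 (Xs i w) (As i w) * Shat (Xs i w) (As i w) t)%R.
Let gS (i : 'I_n) w := (\sum_(b : A) pie (Xs i w) b * Shat (Xs i w) b t)%R.

Let gUm i : measurable_fun setT (gU i).
Proof.
apply: (measXA i (fun x a => iw pie pi0 x a * Shat x a t)%R) => a.
exact: measurable_funM.
Qed.

Let gSm i : measurable_fun setT (gS i).
Proof.
have [mX _] := hmeas i.
have -> : gS i = (fun x => \sum_(b : A) pie x b * Shat x b t)%R \o Xs i by [].
apply: measurableT_comp; last exact: mX.
exact: measurable_sum.
Qed.

Let gU0 i w : (0 <= gU i w)%R.
Proof. by apply: mulr_ge0 => //; have /andP[] := hShb (Xs i w) (As i w) t. Qed.

Let gS0 i w : (0 <= gS i w)%R.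
Proof.
by apply: sumr_ge0 => b _; apply: mulr_ge0 => //; have /andP[] := hShb (Xs i w) b t.
Qed.

Let KT x a : fine (K x a setT) = 1%R.
Proof. by have e := probability_setT (K x a); rewrite e. Qed.

Let termU i : \int[P]_w (gU i w)%:E = Q.
Proof.
transitivity (\int[P]_w (\1_[set w | setT (Ls i w, Cs i w)] w *
   (fun x a => iw pie pi0 x a * Shat x a t) (Xs i w) (As i w))%:E).
  by apply: eq_integral => w _; rewrite indicE mem_set // mul1r.
rewrite (coreA _ _ _ _ _ _ _ _ _ _ _ _ _ _ _ hpi0 hK hmeas hlaw i setT measurableT (fun x a => iw pie pi0 x a * Shat x a t)%R) //.
- rewrite swap.
  + apply: eq_integral => x _; congr (_%:E); apply: eq_bigr => a _.
    by rewrite KT mulr1 mulrAC iwpi0.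
  + move=> a; apply: measurable_funM; first exact: measurable_funM.
    by apply: measurable_funM => //; exact: Kfm.
  + move=> a x; rewrite KT mulr1; apply: mulr_ge0 => //; apply: mulr_ge0 => //.
    by have /andP[] := hShb x a t.
- by move=> a; exact: measurable_funM.
- by move=> x a; apply: mulr_ge0 => //; have /andP[] := hShb x a t.
Qed.

Let termS i : \int[P]_w (gS i w)%:E = Q.
Proof.
transitivity (\int[P]_w (\1_[set w | setT (Ls i w, Cs i w)] w *
   (fun x (a : A) => \sum_(b : A) pie x b * Shat x b t) (Xs i w) (As i w))%:E).
  by apply: eq_integral => w _; rewrite indicE mem_set // mul1r.
rewrite (coreA _ _ _ _ _ _ _ _ _ _ _ _ _ _ _ hpi0 hK hmeas hlaw i setT measurableT (fun x (a : A) => \sum_(b : A) pie x b * Shat x b t)%R) //.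
- rewrite swap.
  + apply: eq_integral => x _; congr (_%:E).
    under eq_bigr do rewrite KT mulr1.
    by rewrite -mulr_sumr; case: hpi0 => _ [-> _]; rewrite mulr1.
  + move=> a; apply: measurable_funM; first exact: measurable_sum.
    by apply: measurable_funM => //; exact: Kfm.
  + move=> a x; rewrite KT mulr1; apply: mulr_ge0 => //.
    by apply: sumr_ge0 => b _; apply: mulr_ge0 => //; have /andP[] := hShb x b t.
- by move=> a; exact: measurable_sum.
- by move=> x a; apply: sumr_ge0 => b _; apply: mulr_ge0 => //; have /andP[] := hShb x b t.
Qed.

Let avg (g : 'I_n -> Omega -> R) (c : R) :
  (forall i, measurable_fun setT (g i)) -> (forall i w, (0 <= g i w)%R) ->
  (forall i, \int[P]_w (g i w)%:E = c%:E) ->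
  \int[P]_w (n%:R^-1 * \sum_(i < n) g i w)%:E = c%:E.
Proof.
move=> mg g0 hg.
under eq_integral do rewrite EFinM.
rewrite ge0_integralZl_EFin //.
- under eq_integral do rewrite -sumEFin.
  rewrite ge0_integral_sum //.
  + under eq_bigr do rewrite hg.
    rewrite sumEFin sumr_const card_ord -EFinM; congr (_%:E).
    by rewrite -[(c *+ n)%R]mulr_natl mulrA mulVf ?mul1r // pnatr_eq0 -lt0n n0.
  + by move=> i; apply/measurable_EFinP.
  + by move=> i w _; rewrite lee_fin.
- by move=> w _; rewrite lee_fin; apply: sumr_ge0.
- by apply/measurable_EFinP; apply: measurable_sum.
Qed.

Let VIPS : \int[P]_w (V_IPS Xs As Ls Cs pie pi0 t w)%:E = J.
Proof.
transitivity (\int[P]_w (n%:R^-1 * \sum_(i < n) gI i w)%:E) => //.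
rewrite -(fineK Jfin) (@avg gI (fine J)) // => i.
by rewrite termI fineK.
Qed.

Let VDR : \int[P]_w (V_DR Xs As Ls Cs pie pi0 Shat t w)%:E = J.
Proof.
pose W w := (n%:R^-1 * \sum_(i < n) (gI i w + gS i w))%R.
pose U w := (n%:R^-1 * \sum_(i < n) gU i w)%R.
have mW : measurable_fun setT W.
  apply: measurable_funM => //; apply: measurable_sum => i.
  exact: measurable_funD.
have mU : measurable_fun setT U.
  by apply: measurable_funM => //; apply: measurable_sum => i.
have W0 w : (0 <= W w)%R.
  by apply: mulr_ge0 => //; apply: sumr_ge0 => i _; apply: addr_ge0.
have U0 w : (0 <= U w)%R.
  by apply: mulr_ge0 => //; apply: sumr_ge0 => i _.
have iW : \int[P]_w (W w)%:E = (fine J + fine Q)%:E.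
  apply: avg => //.
  - by move=> i; exact: measurable_funD.
  - by move=> i w; apply: addr_ge0.
  - move=> i; under eq_integral do rewrite EFinD.
    rewrite ge0_integralD //.
    + by rewrite termI termS EFinD !fineK.
    + by move=> w _; rewrite lee_fin.
    + by apply/measurable_EFinP.
    + by move=> w _; rewrite lee_fin.
    + by apply/measurable_EFinP.
have iU : \int[P]_w (U w)%:E = (fine Q)%:E.
  by apply: avg => // i; rewrite termU fineK.
transitivity (\int[P]_w ((W w)%:E - (U w)%:E)).
  apply: eq_integral => w _; rewrite -EFinB; congr (_%:E).
  rewrite /V_DR /W /U -mulrBr -sumrB; congr (_ * _)%R; apply: eq_bigr => i _.
  by rewrite /gI /gU /gS mulrBr addrAC.
rewrite integralB_EFin //.
- by rewrite iW iU -EFinB addrK fineK.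
- by apply: int_of_fin => //; rewrite iW.
- by apply: int_of_fin => //; rewrite iU.
Qed.

Lemma final :
  let bias := (\int[px]_x
       (\sum_(a : A) pie x a * surv K x a t * (csurv K t x a - 1))%:E)%E in
  ((\int[P]_w (V_IPS Xs As Ls Cs pie pi0 t w)%:E) - policy_value px pie K t
     = bias)%E /\
  ((\int[P]_w (V_DR Xs As Ls Cs pie pi0 Shat t w)%:E) - policy_value px pie K t
     = bias)%E.
Proof.
move=> bias.
suff H : J - policy_value px pie K t = bias by rewrite VIPS VDR.
rewrite /J /policy_value -integralB_EFin //.
- apply: eq_integral => x _; rewrite -EFinB; congr (_%:E).
  rewrite -sumrB; apply: eq_bigr => a _.
  by rewrite mulrBr mulr1 mulrA.
- apply: int01.
    by apply: measurable_sum => a; apply: measurable_funM => //; apply: measurable_funM.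
  move=> x; apply/andP; split.
    by apply: sumr_ge0 => a _; apply: mulr_ge0 => //; apply: mulr_ge0;
      [have /andP[] := surv01 x a | have /andP[] := csurv01 x a].
  case: hpie => _ [+ _] => /(_ x) <-; apply: ler_sum => a _.
  rewrite ler_piMr //; have /andP[s0 s1] := surv01 x a; have /andP[c0 c1] := csurv01 x a.
  by rewrite mulr_ile1.
- apply: int01.
    by apply: measurable_sum => a; apply: measurable_funM.
  move=> x; apply/andP; split.
    by apply: sumr_ge0 => a _; apply: mulr_ge0 => //; have /andP[] := surv01 x a.
  case: hpie => _ [+ _] => /(_ x) <-; apply: ler_sum => a _.
  by rewrite ler_piMr //; have /andP[] := surv01 x a.
Qed.

End main.

Local Close Scope ereal_scope.

Theorem proposition1 (R : realType) (dX : measure_display) (X : measurableType dX)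
  (A : finType) (px : probability X R) (pi0 pie : X -> A -> R)
  (K : X -> A -> probability (R * R)%type R) (t : R)
  (Shat : X -> A -> R -> R)
  (dO : measure_display) (Omega : measurableType dO) (P : probability Omega R)
  (n : nat) (Xs : 'I_n -> Omega -> X) (As : 'I_n -> Omega -> A)
  (Ls Cs : 'I_n -> Omega -> R) :
  (0 < n)%N -> 0 <= t ->
  is_policy pi0 -> is_policy pie -> is_outcome_kernel K ->
  (forall x a, 0 < pie x a -> 0 < pi0 x a) ->
  cond_indep_censoring K ->
  censoring_present px pi0 K ->
  (forall a, measurable_fun setT (fun x => Shat x a t)) ->
  (forall x a s, 0 <= Shat x a s <= 1) ->
  data_measurable Xs As Ls Cs ->
  data_law Xs As Ls Cs P px pi0 K ->
  data_indep Xs As Ls Cs P ->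
  let bias := (\int[px]_x
       (\sum_(a : A) pie x a * surv K x a t * (csurv K t x a - 1))%:E)%E in
  ((\int[P]_w (V_IPS Xs As Ls Cs pie pi0 t w)%:E) - policy_value px pie K t
     = bias)%E /\
  ((\int[P]_w (V_DR Xs As Ls Cs pie pi0 Shat t w)%:E) - policy_value px pie K t
     = bias)%E.
Proof.
move=> n0 t0 hpi0 hpie hK hsupp hind _ hShm hShb hmeas hlaw _.
by apply: final.
Qed.
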